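(* Let $G=(V,E)$ be a transient, connected, simple, locally finite graph with fixed vertex $o$ and fixed rotor mechanism $(m_x)_{x\in V}$. For any initial rotor configuration $\rho$, any $n\geq1$, and any $t\geq 0$, \[ M_t(\rho,n)=n\,\frac{\mathcal{G}(o)}{\deg(o)}. \]
   Context: For $x\in V$, $\mathcal{E}_x$ is the set of outgoing directed edges $(x,y)$ with $y$ a neighbor of $x$, and $\deg(x)=|\mathcal{E}_x|$. A rotor mechanism is a choice, for each $x$, of a bijection $m_x:\mathcal{E}_x\to\mathcal{E}_x$ with exactly one orbit. A rotor configuration is a map $\rho$ with $\rho(x)\in\mathcal{E}_x$ for each $x$. $\mathcal{G}(x)$ is the expected number of visits to $x$ by simple random walk on $G$ started at $o$. Weight of a directed edge $(x,y)$: writing $(x,y_i):=m_x^i(x,y)$, \[ w(x,y):=\frac{-1}{\deg(x)}\sum_{i=0}^{\deg(x)-1} i\,\frac{\mathcal{G}(y_{i+1})}{\deg(y_{i+1})}. \] Experiment: given $\rho$ and $n\ge1$, define $X_t^{(0)},\dots,X_t^{(n-1)}$ and $\rho_t$ ($t\ge0$) by: $X_0^{(i)}=o$ for all $i$, $\rho_0=\rho$. Let $i_t:=t+1\bmod n$. Particle $i$ has returned to $o$ by time $t$ if $X_t^{(i)}=o$ and $X_s^{(i)}\ne o$ for some $s<t$. If particle $i_t$ has returned to $o$ by time $t$, then $\rho_{t+1}=\rho_t$ and all positions stay the same. Otherwise $\rho_{t+1}(x)=m_x(\rho_t(x))$ for $x=X_t^{(i_t)}$ and $\rho_{t+1}(x)=\rho_t(x)$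 otherwise; $X_{t+1}^{(i_t)}$ is the target vertex of $\rho_{t+1}(X_t^{(i_t)})$ and $X_{t+1}^{(i)}=X_t^{(i)}$ for $i\ne i_t$. Range: $R_t:=\{X_s^{(i)}: i\in\{0,\dots,n-1\},\ s\le t\}$. Define \[ M_t(\rho,n):=\sum_{i=0}^{n-1}\frac{\mathcal{G}(X_t^{(i)})}{\deg(X_t^{(i)})}+\frac{\min\{t,n\}}{\deg(o)}+\sum_{x\in R_t}\bigl(w(\rho_t(x))-w(\rho(x))\bigr). \] *)

(* Defs.v *)
From HB Require Import structures.
From mathcomp Require Import all_boot all_order all_algebra.
From mathcomp Require Import all_classical all_reals all_analysis.
Set Implicit Arguments. Unset Strict Implicit. Unset Printing Implicit Defensive.
Import Order.TTheory GRing.Theory Num.Theory numFieldNormedType.Exports.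
Local Open Scope ring_scope.

Section RotorDefs.
Variables (R : realType) (V : eqType) (o : V) (nbrs : V -> seq V).

(* The graph: nbrs x is the (finite) list of neighbours of x; the outgoing
   directed edge (x,y) is represented by its target y \in nbrs x. *)
Definition deg (x : V) : nat := size (nbrs x).

Definition simple_graph : Prop :=
  forall x, [/\ uniq (nbrs x), x \notin nbrs x &
                forall y, (y \in nbrs x) = (x \in nbrs y)].

Definition adj (x y : V) : bool := y \in nbrs x.

Definition connected_graph : Prop :=
  forall x, exists s : seq V, path adj o s /\ last o s = x.

(* P_o(simple random walk is at x at time t) *)
Fixpoint srw_prob (t : nat) (x : V) : R :=
  match t with
  | 0 => (x == o)%:R
  | t'.+1 => \sum_(y <- nbrs x) srw_prob t' y / (deg y)%:R
  end.

Definition green (x : V) : R := limn (series (fun t => srw_prob t x) : R^nat).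

Definition transient : Prop := cvgn (series (fun t => srw_prob t o) : R^nat).

Definition rotor_mechanism (m : V -> V -> V) : Prop :=
  forall x, [/\ {in nbrs x, forall y, m x y \in nbrs x},
                {in nbrs x &, injective (m x)} &
                {in nbrs x &, forall y z, exists k, iter k (m x) y = z}].

Definition rotor_config (rho : V -> V) : Prop := forall x, rho x \in nbrs x.

Variable m : V -> V -> V.

Definition weight (x y : V) : R :=
  - ((deg x)%:R)^-1 *
    \sum_(i < deg x) (i%:R * (green (iter i.+1 (m x) y)
                               / (deg (iter i.+1 (m x) y))%:R)).

Variables (rho : V -> V) (n : nat).

(* state at a time: positions of particles (index i < n) and rotors *)
Definition state := ((nat -> V) * (V -> V))%type.
Definition init_state : state := (fun _ => o, rho).

Definition upd (T : eqType) (U : Type) (f : T -> U) (a : T) (b : U) : T -> U :=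
  fun z => if z == a then b else f z.

(* h = [:: state_0; ...; state_t] ; particle i has returned to o by time t *)
Definition returned (h : seq state) (t i : nat) : bool :=
  ((nth init_state h t).1 i == o) &&
  has (fun s => (nth init_state h s).1 i != o) (iota 0 t).

Definition step (t : nat) (h : seq state) : state :=
  let: (pos, rot) := last init_state h in
  let i := (t.+1 %% n)%N in
  if returned h t i then (pos, rot) else
  let x := pos i in
  let rot' := upd rot x (m x (rot x)) in
  (upd pos i (rot' x), rot').

Fixpoint hist (t : nat) : seq state :=
  match t with
  | 0 => [:: init_state]
  | t'.+1 => rcons (hist t') (step t' (hist t'))
  end.

Definition Xpos (t i : nat) : V := (last init_state (hist t)).1 i.
Definition rotor (t : nat) : V -> V := (last init_state (hist t)).2.

Definition range_t (t : nat) : seq V :=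
  undup [seq Xpos s i | s <- iota 0 t.+1, i <- iota 0 n].

Definition Mt (t : nat) : R :=
  \sum_(i < n) green (Xpos t i) / (deg (Xpos t i))%:R
  + (minn t n)%:R / (deg o)%:R
  + \sum_(x <- range_t t) (weight x (rotor t x) - weight x (rho x)).

End RotorDefs.

(* Main.v *)
Require Import Defs.
From HB Require Import structures.
From mathcomp Require Import all_boot all_order all_algebra.
From mathcomp Require Import all_classical all_reals all_analysis.
From mathcomp Require Import ring lra zify.
Import Order.TTheory GRing.Theory Num.Theory numFieldNormedType.Exports.
Local Open Scope ring_scope.

Section Green.
Variables (R : realType) (V : eqType) (o : V) (nbrs : V -> seq V).
Hypothesis hdeg : forall x, (0 < deg nbrs x)%N.

Local Notation p := (srw_prob R o nbrs).
Local Notation S x := (series (fun t => p t x) : R^nat).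

Lemma srw_ge0 t x : 0 <= p t x.
Proof.
elim: t x => [|t IH] x /=; first by case: (x == o).
apply: sumr_ge0 => y _; apply: divr_ge0 => //; exact: IH.
Qed.

Lemma S_nd x : nondecreasing_seq (S x).
Proof. by apply: nondecreasing_series => k _ _; exact: srw_ge0. Qed.

Lemma S_succ x N : S x N.+1 = (x == o)%:R + \sum_(y <- nbrs x) S y N / (deg nbrs y)%:R.
Proof.
rewrite /series /= big_nat_recl //=; congr (_ + _).
under eq_bigr do rewrite /=.
rewrite exchange_big /=; apply: eq_bigr => y _.
by rewrite mulr_suml.
Qed.

Lemma S_adj a b N : b \in nbrs a -> S b N <= (deg nbrs b)%:R * S a N.+1.
Proof.
move=> bin.
have db : (0 : R) < (deg nbrs b)%:R by rewrite ltr0n.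
have h1 : forall t, p t b <= (deg nbrs b)%:R * p t.+1 a.
  move=> t /=; rewrite (big_rem b) //=.
  rewrite mulrDr -[X in X <= _]addr0 lerD //.
    by rewrite mulrC mulfVK // gt_eqF.
  apply: mulr_ge0; first exact: ler0n.
  apply: sumr_ge0 => y _; apply: divr_ge0 => //; exact: srw_ge0.
rewrite /series /= big_nat_recl // mulrDr.
rewrite -[X in X <= _]add0r lerD //.
  apply: mulr_ge0; first exact: ler0n. exact: srw_ge0.
rewrite mulr_sumr; apply: ler_sum => t _; exact: h1.
Qed.

Definition bnd x := exists B : R, forall N, S x N <= B.

Lemma bnd_path a s : path (adj nbrs) a s -> bnd a -> bnd (last a s).
Proof.
elim: s a => [|b s IH] a //= /andP[ab pth] [B hB]; apply: IH => //.
exists ((deg nbrs b)%:R * B) => N.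
apply: le_trans (@S_adj a b N ab) _; apply: ler_wpM2l; first exact: ler0n.
exact: hB.
Qed.

Lemma S_cvg x : connected_graph o nbrs -> transient R o nbrs -> cvgn (S x).
Proof.
move=> conn tr.
have bo : bnd o.
  exists (limn (S o)) => N; apply: nondecreasing_cvgn_le => //; exact: S_nd.
have [s [ps ls]] := conn x.
have [B hB] : bnd x by rewrite -ls; exact: bnd_path.
apply: nondecreasing_is_cvgn; first exact: S_nd.
by exists B => _ [N _ <-].
Qed.

Lemma green_harm x : connected_graph o nbrs -> transient R o nbrs ->
  green R o nbrs x = (x == o)%:R + \sum_(y <- nbrs x) green R o nbrs y / (deg nbrs y)%:R.
Proof.
move=> conn tr; rewrite /green; apply: cvg_lim => //.
rewrite -cvg_shiftS /=.
under eq_fun do rewrite S_succ.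
apply: cvgD; first exact: cvg_cst.
elim: (nbrs x) => [|y s IH].
  under eq_fun do rewrite big_nil. rewrite big_nil; exact: cvg_cst.
under eq_fun do rewrite big_cons. rewrite big_cons.
apply: cvgD => //.
apply: cvgMr_tmp. exact: S_cvg.
Qed.
End Green.
Lemma wt_alg (R : realType) (c : nat -> R) d : (0 < d)%N -> c d.+1 = c 1%N ->
  - (d%:R^-1) * (\sum_(i < d) (i%:R * c i.+2)) - (- (d%:R^-1) * \sum_(i < d) (i%:R * c i.+1))
  = d%:R^-1 * (\sum_(i < d) c i.+1) - c 1%N.
Proof.
case: d => // d' _ ecd.
rewrite big_ord_recr /= ecd.
rewrite [\sum_(i < d'.+1) (_ * c i.+1)]big_ord_recl /= mul0r add0r.
rewrite [\sum_(i < d'.+1) c i.+1]big_ord_recl /=.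
have -> : \sum_(i < d') ((bump 0 i)%:R * c (bump 0 i).+1) =
          \sum_(i < d') (i%:R * c i.+2) + \sum_(i < d') c i.+2.
  rewrite -big_split /=; apply: eq_bigr => i _.
  by rewrite /bump /= add1n -addn1 natrD mulrDl mul1r.
have -> : \sum_(i < d') c (bump 0 i).+1 = \sum_(i < d') c i.+2 by [].
set X := \sum_(i < d') _; set Y := \sum_(i < d') _.
have hD : (d'.+1%:R : R) != 0 by rewrite pnatr_eq0.
rewrite -addn1 natrD in hD *.
field. exact: hD.
Qed.
Section Orbit.
Variables (V : eqType) (N : seq V) (f : V -> V).
Hypotheses (uN : uniq N) (fin : {in N, forall y, f y \in N})
  (finj : {in N &, injective f})
  (forb : {in N &, forall y z, exists k, iter k f y = z}).

Lemma iter_in k y : y \in N -> iter k f y \in N.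
Proof. by elim: k => //= k IH yN; apply: fin; exact: IH. Qed.

Lemma iter_inj k : {in N &, injective (iter k f)}.
Proof.
elim: k => // k IH y z yN zN /= e.
apply: IH => //; apply: finj => //; exact: iter_in.
Qed.

Lemma iter_mod p y k : iter p f y = y -> iter k f y = iter (k %% p)%N f y.
Proof.
move=> e; rewrite {1}(divn_eq k p) addnC iterD; congr (iter _ f _).
elim: (k %/ p)%N => // q IH; by rewrite mulSn iterD IH.
Qed.

Lemma no_short p y : (0 < p < size N)%N -> y \in N -> iter p f y != y.
Proof.
move=> /andP[p0 pN] yN; apply/negP => /eqP e.
have sub : {subset N <= [seq iter k f y | k <- iota 0 p]}.
  move=> z zN; have [k hk] := forb y z yN zN.
  apply/mapP; exists (k %% p)%N; first by rewrite mem_iota /= ltn_mod p0.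
  by rewrite -hk (@iter_mod p y k e).
have := uniq_leq_size uN sub; rewrite size_map size_iota.
by rewrite leqNgt pN.
Qed.

Definition orbL y := [seq iter i.+1 f y | i <- iota 0 (size N)].

Lemma orbL_uniq y : y \in N -> uniq (orbL y).
Proof.
move=> yN; rewrite map_inj_in_uniq ?iota_uniq //.
have key : forall i j, (i < j < size N)%N -> iter i.+1 f y = iter j.+1 f y -> False.
  move=> i j /andP[ij jN] e.
  have : iter (j - i) f y = y.
    apply: (@iter_inj i.+1) => //; first exact: iter_in.
    by rewrite -iterD e addSn addnC subnK // ltnW.
  apply/eqP; apply: no_short => //; rewrite subn_gt0 ij /=.
  by apply: leq_ltn_trans jN; exact: leq_subr.
move=> i j; rewrite !mem_iota /= !add0n => iN jN e.
case: (ltngtP i j) => // h.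
  by case: (key i j) => //; rewrite h.
by case: (key j i) => //; rewrite h.
Qed.

Lemma orbL_sub y : y \in N -> {subset orbL y <= N}.
Proof. by move=> yN _ /mapP[i _ ->]; exact: iter_in. Qed.

Lemma orbL_mem y : y \in N -> orbL y =i N.
Proof.
move=> yN.
have hs : (size N <= size (orbL y))%N by rewrite size_map size_iota.
by have [] := uniq_min_size (orbL_uniq y yN) (orbL_sub y yN) hs.
Qed.

Lemma orbL_perm y : y \in N -> perm_eq (orbL y) N.
Proof. by move=> yN; apply: uniq_perm => //; [exact: (orbL_uniq y yN) | exact: (orbL_mem y yN)]. Qed.

Lemma iter_size y : y \in N -> iter (size N) f y = y.
Proof.
move=> yN; have := yN; rewrite -(orbL_mem y yN) => /mapP[i].
rewrite mem_iota /= add0n => iN e.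
have : (i.+1 == size N) || (i.+1 < size N)%N by rewrite -leq_eqVlt.
case/orP => [/eqP <- // | lt].
by have := @no_short i.+1 y; rewrite lt /= -e eqxx => /(_ isT yN).
Qed.
End Orbit.

Lemma weight_step (R : realType) (V : eqType) (o : V) (nbrs : V -> seq V) (m : V -> V -> V) x y :
  uniq (nbrs x) -> {in nbrs x, forall y, m x y \in nbrs x} ->
  {in nbrs x &, injective (m x)} ->
  {in nbrs x &, forall y z, exists k, iter k (m x) y = z} ->
  y \in nbrs x ->
  weight R o nbrs m x (m x y) - weight R o nbrs m x y =
  (deg nbrs x)%:R^-1 * (\sum_(z <- nbrs x) green R o nbrs z / (deg nbrs z)%:R)
  - green R o nbrs (m x y) / (deg nbrs (m x y))%:R.
Proof.
move=> uN fin finj forb yN.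
have d0 : (0 < deg nbrs x)%N by rewrite /deg; case: (nbrs x) yN.
set h := fun z => green R o nbrs z / (deg nbrs z)%:R.
have hper : perm_eq (@orbL V (nbrs x) (m x) y) (nbrs x) by exact: orbL_perm.
have hit : iter (deg nbrs x) (m x) y = y by exact: iter_size.
have := @wt_alg R (fun k => h (iter k (m x) y)) (deg nbrs x) d0.
rewrite iterS hit => /(_ erefl) E.
rewrite /weight.
under eq_bigr do rewrite -iterSr.
rewrite E; congr (_ * _ - _).
rewrite -(perm_big _ hper) /orbL big_map -(big_mkord xpredT (fun i => h (iter i.+1 (m x) y))).
by rewrite /index_iota subn0.
Qed.
Set Implicit Arguments. Unset Strict Implicit.
Section Dyn.
Variables (V : eqType) (o : V) (nbrs : V -> seq V) (m : V -> V -> V) (rho : V -> V) (n : nat).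
Local Open Scope nat_scope.
Hypothesis n0 : (0 < n)%N.
Hypothesis simp : simple_graph nbrs.
Hypothesis rmech : rotor_mechanism nbrs m.
Hypothesis rconf : rotor_config nbrs rho.

Local Notation H := (hist o m rho n).
Local Notation X := (Xpos o m rho n).
Local Notation rot := (rotor o m rho n).
Local Notation ist := (init_state o rho).
Local Notation ret t := (returned o rho (H t) t (t.+1 %% n)).

Lemma size_hist t : size (H t) = t.+1.
Proof. by elim: t => //= t IH; rewrite size_rcons IH. Qed.

Lemma nth_hist t s : (s <= t)%N -> nth ist (H t) s = last ist (H s).
Proof.
elim: t => [|t IH]; first by rewrite leqn0 => /eqP ->.
rewrite leq_eqVlt => /orP[/eqP -> | lt].
  by rewrite /= nth_rcons size_hist ltnn eqxx last_rcons.
by rewrite /= nth_rcons size_hist lt IH.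
Qed.

Lemma retE t : ret t = (X t (t.+1 %% n) == o) && has (fun s => X s (t.+1 %% n) != o) (iota 0 t).
Proof.
rewrite /returned nth_hist //; congr andb.
apply: eq_in_has => s; rewrite mem_iota add0n /= => lt.
by rewrite nth_hist // ltnW.
Qed.

Lemma stepE t : last ist (H t.+1) =
  if ret t then last ist (H t) else
  (upd (X t) (t.+1 %% n) (m (X t (t.+1 %% n)) (rot t (X t (t.+1 %% n)))),
   upd (rot t) (X t (t.+1 %% n)) (m (X t (t.+1 %% n)) (rot t (X t (t.+1 %% n))))).
Proof.
rewrite /= last_rcons /step /Xpos /rotor.
case: (last ist (H t)) => pos r /=.
case: ifP => // _; by rewrite /upd eqxx.
Qed.

Lemma X_ret t : ret t -> X t.+1 = X t.
Proof. by move=> h; rewrite /Xpos stepE h. Qed.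
Lemma rot_ret t : ret t -> rot t.+1 = rot t.
Proof. by move=> h; rewrite /rotor stepE h. Qed.
Lemma X_mv t : ~~ ret t -> X t.+1 = upd (X t) (t.+1 %% n) (m (X t (t.+1 %% n)) (rot t (X t (t.+1 %% n)))).
Proof. by move=> h; rewrite /Xpos stepE (negbTE h). Qed.
Lemma rot_mv t : ~~ ret t -> rot t.+1 = upd (rot t) (X t (t.+1 %% n)) (m (X t (t.+1 %% n)) (rot t (X t (t.+1 %% n)))).
Proof. by move=> h; rewrite /rotor stepE (negbTE h). Qed.

Lemma X_other t j : j != (t.+1 %% n)%N -> X t.+1 j = X t j.
Proof.
move=> hj; case: (boolP (ret t)) => h; first by rewrite X_ret.
by rewrite X_mv // /upd (negbTE hj).
Qed.

Lemma rot_in t z : rot t z \in nbrs z.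
Proof.
elim: t z => [|t IH] z; first exact: rconf.
case: (boolP (ret t)) => h; first by rewrite rot_ret.
rewrite rot_mv // /upd; case: eqP => [->|_]; last exact: IH.
have [fin _ _] := rmech (X t (t.+1 %% n)); exact: fin (IH _).
Qed.

Lemma stay i s : (forall s', (s' < s)%N -> (s'.+1 %% n)%N != i) -> X s i = o.
Proof.
elim: s => [|s IH] h; first by [].
rewrite X_other; last by rewrite eq_sym; apply: h.
by apply: IH => s' lt; apply: h; rewrite ltnS ltnW.
Qed.

Lemma L1 t : (t < n)%N -> X t (t.+1 %% n) = o /\ ~~ ret t.
Proof.
move=> tn.
have hs : forall s, (s <= t)%N -> X s (t.+1 %% n) = o.
  move=> s st; apply: stay => s' lt; apply/eqP => e.
  have lt' : (s' < t)%N by apply: leq_trans lt st.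
  move: e; rewrite (@modn_small s'.+1); last by apply: leq_ltn_trans lt' tn.
  move=> e.
  have [tn'|tn'] := ltnP t.+1 n.
    by move: e; rewrite modn_small // => -[] ee; move: lt'; rewrite ee ltnn.
  have tt : t.+1 = n by apply/eqP; rewrite eqn_leq tn tn'.
  by move: e; rewrite tt modnn.
split; first exact: hs.
rewrite retE negb_and; apply/orP; right.
apply/hasPn => s; rewrite mem_iota add0n /= => lt.
by rewrite hs ?eqxx // ltnW.
Qed.

Lemma L2 t : (n <= t)%N -> X t (t.+1 %% n) = o -> ret t.
Proof.
move=> nt e.
set f := (t %% n)%N.
have fn : (f < n)%N by rewrite ltn_mod.
have fi : (f.+1 %% n)%N = (t.+1 %% n)%N by rewrite /f -addn1 modnDml addn1.
have [e1 h1] := L1 fn.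
rewrite fi in e1 h1.
have hx : X f.+1 (t.+1 %% n) \in nbrs o.
  rewrite X_mv fi // /upd eqxx e1.
  have [fin _ _] := rmech o; apply: fin; exact: rot_in.
have hne : X f.+1 (t.+1 %% n) != o.
  by apply/negP => /eqP ee; have [_ hh _] := simp o; move: hx; rewrite ee (negbTE hh).
rewrite retE e eqxx /=; apply/hasP; exists f.+1 => //.
rewrite mem_iota add0n /=.
have : f.+1 != t by apply/negP => /eqP ee; move: hne; rewrite ee e eqxx.
have : (f.+1 <= t)%N by apply: leq_trans nt.
clear; move=> a b; lia.
Qed.

Local Notation rng := (range_t o m rho n).

Lemma range_memP t z : reflect (exists s j, [/\ s <= t, j < n & z = X s j]) (z \in rng t).
Proof.
rewrite /range_t mem_undup; apply: (iffP allpairsP).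
  move=> [[s j] [hs hj ->]]; exists s, j.
  move: hs hj; rewrite !mem_iota !add0n => /andP[_ hs] /andP[_ hj].
  by split.
move=> [s [j [hs hj ->]]]; exists (s, j).
by rewrite !mem_iota !add0n ltnS hs hj.
Qed.

Lemma range_X s t j : s <= t -> j < n -> X s j \in rng t.
Proof. by move=> hs hj; apply/range_memP; exists s, j. Qed.

Lemma range_mono t : {subset rng t <= rng t.+1}.
Proof.
move=> z /range_memP [s [j [hs hj ->]]]; apply: range_X => //; exact: leqW.
Qed.

Lemma range_new t z : z \in rng t.+1 -> z \in rng t \/ exists2 j, j < n & z = X t.+1 j.
Proof.
move=> /range_memP [s [j [hs hj ->]]].
move: hs; rewrite leq_eqVlt ltnS => /orP[/eqP -> | hs].
  by right; exists j.
by left; apply: range_X.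
Qed.

Lemma range_ret t : ret t -> rng t.+1 =i rng t.
Proof.
move=> h z; apply/idP/idP; last exact: range_mono.
case/range_new => // -[j hj ->]; rewrite X_ret //; exact: range_X.
Qed.

Lemma range_mv t : ~~ ret t ->
  rng t.+1 =i (m (X t (t.+1 %% n)) (rot t (X t (t.+1 %% n)))) :: rng t.
Proof.
move=> h z; rewrite inE; apply/idP/idP.
  case/range_new => [->|[j hj ->]]; first by rewrite orbT.
  rewrite X_mv // /upd; case: ifP => _; first by rewrite eqxx.
  by rewrite range_X ?orbT.
case/orP => [/eqP ->|]; last exact: range_mono.
have := @range_X t.+1 t.+1 (t.+1 %% n) (leqnn _) (ltn_pmod _ n0).
by rewrite X_mv // /upd eqxx.
Qed.

Lemma rot_out t z : z \notin rng t -> rot t z = rho z.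
Proof.
elim: t z => [|t IH] z hz; first by [].
have hz' : z \notin rng t by apply: contra hz; exact: range_mono.
case: (boolP (ret t)) => h; first by rewrite rot_ret // IH.
rewrite rot_mv // /upd; case: eqP => [e|_]; last exact: IH.
by move: hz'; rewrite e range_X // ltn_pmod.
Qed.

End Dyn.

Section Main.
Variables (R : realType) (V : eqType) (o : V) (nbrs : V -> seq V) (m : V -> V -> V)
  (rho : V -> V) (n : nat).
Hypotheses (n0 : (0 < n)%N) (simp : simple_graph nbrs) (conn : connected_graph o nbrs)
  (tr : transient R o nbrs) (rmech : rotor_mechanism nbrs m) (rconf : rotor_config nbrs rho).

Local Notation X := (Xpos o m rho n).
Local Notation rot := (rotor o m rho n).
Local Notation rng := (range_t o m rho n).
Local Notation ret t := (returned o rho (hist o m rho n t) t (t.+1 %% n)%N).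
Local Notation h z := (green R o nbrs z / (deg nbrs z)%:R).
Local Notation w := (weight R o nbrs m).

Lemma hdeg x : (0 < deg nbrs x)%N.
Proof. by have := rconf x; rewrite /deg; case: (nbrs x). Qed.

Lemma Mstep t : Mt R o nbrs m rho n t.+1 = Mt R o nbrs m rho n t.
Proof.
rewrite /Mt.
have ru : forall t, uniq (rng t) by move=> s; exact: undup_uniq.
case: (boolP (ret t)) => hr.
  have nt : (n <= t)%N.
    rewrite leqNgt; apply/negP => lt.
    have [_ hh] : X t (t.+1 %% n)%N = o /\ ~~ ret t by apply: L1.
    by rewrite hr in hh.
  have e1 : X t.+1 = X t by apply: X_ret.
  have e2 : rot t.+1 = rot t by apply: rot_ret.
  have e3 : rng t.+1 =i rng t by apply: range_ret.
  rewrite e1 e2 (perm_big _ (uniq_perm (ru t.+1) (ru t) e3)).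
  by rewrite (minn_idPr nt) (minn_idPr (leqW nt)).
set i := (t.+1 %% n)%N.
have hi : (i < n)%N by rewrite ltn_pmod.
set x := X t i.
set y := rot t x.
set y1 := m x y.
have eX : X t.+1 = upd (X t) i y1 by apply: X_mv.
have eR : rot t.+1 = upd (rot t) x y1 by apply: rot_mv.
have yN : y \in nbrs x by exact: rot_in.
have [fin finj forb] := rmech x.
have [uN xnx _] := simp x.
have y1N : y1 \in nbrs x by exact: fin.
have ea : \sum_(j < n) h (X t.+1 j) = \sum_(j < n) h (X t j) + h y1 - h x.
  rewrite (bigD1 (Ordinal hi)) //= [in RHS](bigD1 (Ordinal hi)) //=.
  rewrite eX /upd eqxx -/x.
  have -> : \sum_(j < n | j != Ordinal hi) h (if j == i :> nat then y1 else X t j)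
          = \sum_(j < n | j != Ordinal hi) h (X t j).
    apply: eq_bigr => j hj; suff -> : (j == i :> nat) = false by [].
    by apply/negbTE; move: hj; apply: contra => /eqP e; apply/eqP; apply: val_inj.
  ring.
have xr : x \in rng t by apply: range_X.
have eb : \sum_(z <- rng t.+1) (w z (rot t.+1 z) - w z (rho z)) =
          \sum_(z <- rng t) (w z (rot t z) - w z (rho z)) + (w x y1 - w x y).
  rewrite (perm_big (undup (y1 :: rng t))); last first.
    apply: uniq_perm => //; first exact: undup_uniq.
    have e4 : rng t.+1 =i y1 :: rng t by apply: range_mv.
    by move=> z; rewrite mem_undup e4.
  have eb2 : \sum_(z <- rng t) (w z (rot t.+1 z) - w z (rho z)) =
          \sum_(z <- rng t) (w z (rot t z) - w z (rho z)) + (w x y1 - w x y).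
    rewrite (bigD1_seq x) //= [in RHS](bigD1_seq x) //=.
    rewrite eR /upd eqxx -/y.
    have -> : \sum_(z <- rng t | z != x) (w z (if z == x then y1 else rot t z) - w z (rho z))
      = \sum_(z <- rng t | z != x) (w z (rot t z) - w z (rho z)).
      by apply: eq_bigr => z hz; rewrite (negbTE hz).
    ring.
  rewrite /= (undup_id (ru t)).
  case: ifP => hy1; first exact: eb2.
  rewrite big_cons eb2.
  have -> : rot t.+1 y1 = rho y1.
    rewrite eR /upd.
    have -> : (y1 == x) = false by apply/negbTE/negP => /eqP e; move: y1N; rewrite e (negbTE xnx).
    by apply: rot_out => //; rewrite hy1.
  by rewrite subrr add0r.
have ec : ((minn t.+1 n)%:R : R) = (minn t n)%:R + (t < n)%N%:R.
  rewrite -natrD; congr (_%:R).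
  case: (ltnP t n) => h1.
    by rewrite addn1; apply/minn_idPl.
  by rewrite addn0; apply/minn_idPr; apply: leqW.
have ed : w x y1 - w x y = h x - (x == o)%:R / (deg nbrs x)%:R - h y1.
  rewrite weight_step //.
  rewrite [in RHS](@green_harm R V o nbrs hdeg x conn tr).
  rewrite -/y1; ring.
rewrite ea eb ec ed.
have ef : (x == o)%:R / (deg nbrs x)%:R = (t < n)%N%:R / (deg nbrs o)%:R :> R.
  case: (ltnP t n) => h1.
    have [e1 _] : X t (t.+1 %% n)%N = o /\ ~~ ret t by apply: L1.
    by rewrite -/i -/x in e1; rewrite e1 eqxx.
  have : x != o.
    apply/negP => /eqP e1; move: hr.
    have -> // : ret t by apply: L2.
  by move/negbTE => ->; rewrite !mul0r.
rewrite ef mulrDl.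
set A := \sum_(j < n) _.
set B := \sum_(z <- _) _.
set C := (minn t n)%:R / _.
set D := (t < n)%N%:R / _.
set E := w x y1.
ring.
Qed.

Lemma Mall t : Mt R o nbrs m rho n t = n%:R * green R o nbrs o / (deg nbrs o)%:R.
Proof.
elim: t => [|t IH]; last by rewrite Mstep.
rewrite /Mt /= min0n mul0r addr0.
rewrite [X in _ + X]big1; last by move=> z _; rewrite subrr.
rewrite addr0 /Xpos /= sumr_const card_ord.
by rewrite -[RHS]mulrA mulr_natl.
Qed.

End Main.

Theorem proposition2p1 (R : realType) (V : eqType) (o : V)
  (nbrs : V -> seq V) (m : V -> V -> V) :
  simple_graph nbrs ->
  connected_graph o nbrs ->
  transient R o nbrs ->
  rotor_mechanism nbrs m ->
  forall (rho : V -> V) (n t : nat),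
    rotor_config nbrs rho ->
    (1 <= n)%N ->
    Mt R o nbrs m rho n t = n%:R * green R o nbrs o / (deg nbrs o)%:R.
Proof.
move=> simp conn tr rmech rho n t rconf n1.
exact: Mall.
Qed.
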